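(* Let $N\ge c\geq 2$ and let $\Gamma$ be the $c$-complete hypergraph on $N$ vertices. Then the spectrum of its (signless) normalized Laplacian is given by $\frac{N-c}{N-1}$, with multiplicity $N-1$, and $c$, with multiplicity $1$.
   Context: A hypergraph $\Gamma=(\mathcal{V},\mathcal{H})$ has a finite vertex set $\mathcal{V}=\{v_1,\ldots,v_N\}$ and a set $\mathcal{H}$ of nonempty subsets of $\mathcal{V}$ (hyperedges). $\deg(v)$ is the number of hyperedges containing $v$, $D$ the diagonal degree matrix, $A$ the matrix with $A_{ii}=0$ and $A_{ij}=-\#\{h\in\mathcal{H}: v_i,v_j\in h\}$ for $i\ne j$, and the (signless) normalized Laplacian is $L=\mathrm{Id}-D^{-1}A$. The $c$-complete hypergraph on $N$ vertices is the hypergraph whose hyperedges are all $\binom{N}{c}$ subsets of $\mathcal{V}$ of cardinality $c$. *)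

(* Defs.v *)
From HB Require Import structures.
From mathcomp Require Import all_boot all_order all_algebra.
Set Implicit Arguments. Unset Strict Implicit. Unset Printing Implicit Defensive.
Import Order.TTheory GRing.Theory Num.Theory.
Local Open Scope ring_scope.

Definition is_hypergraph (N : nat) (H : {set {set 'I_N}}) : Prop :=
  forall h, h \in H -> h != set0.

Definition hdeg (N : nat) (H : {set {set 'I_N}}) (v : 'I_N) : nat :=
  #|[set h in H | v \in h]|.

Definition hadj (R : ringType) (N : nat) (H : {set {set 'I_N}}) : 'M[R]_N :=
  \matrix_(i, j) (if i == j then 0
                  else - (#|[set h in H | (i \in h) && (j \in h)]|%:R)).

Definition hdegmx (R : ringType) (N : nat) (H : {set {set 'I_N}}) : 'M[R]_N :=
  \matrix_(i, j) (if i == j then (hdeg H i)%:R else 0).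

Definition hlaplacian (R : fieldType) (N : nat) (H : {set {set 'I_N}}) : 'M[R]_N :=
  1%:M - (\matrix_(i, j) (if i == j then ((hdeg H i)%:R)^-1 else 0)) *m hadj R H.

Definition complete_hypergraph (N c : nat) : {set {set 'I_N}} :=
  [set h : {set 'I_N} | #|h| == c].

(* Main.v *)
Require Import Defs.
From HB Require Import structures.
From mathcomp Require Import all_boot all_order all_algebra.
From mathcomp Require Import ring.
Import Order.TTheory GRing.Theory Num.Theory.
Local Open Scope ring_scope.

Lemma sum_delta (S : nzRingType) n (F : 'I_n -> S) j :
  \sum_k F k * (k == j)%:R = F j.
Proof.
by rewrite (bigD1 j) //= eqxx mulr1 big1 ?addr0 // => k /negbTE ->; rewrite mulr0.
Qed.

Lemma sum_deltal (S : nzRingType) n (F : 'I_n -> S) j :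
  \sum_k (j == k)%:R * F k = F j.
Proof.
by rewrite (bigD1 j) //= eqxx mul1r big1 ?addr0 // => k; rewrite eq_sym => /negbTE ->; rewrite mul0r.
Qed.

Lemma det_aIbJ (S : comNzRingType) n (y b : S) :
  \det (\matrix_(i, j) (y *+ (i == j) - b) : 'M[S]_n.+1) = y ^+ n * (y - b *+ n.+1).
Proof.
set M := \matrix_(i, j) _.
pose A : 'M[S]_n.+1 := \matrix_(i, j) ((i == j) || (i == ord0))%:R.
pose B : 'M[S]_n.+1 := \matrix_(i, j) ((i == j)%:R - ((i == ord0) && (j != ord0))%:R).
have detA : \det A = 1.
  rewrite -det_tr det_trig; last first.
    apply/is_trig_mxP => i j lt_ij; rewrite !mxE.
    have -> : (j == i) = false by apply/negbTE; rewrite neq_ltn lt_ij orbT.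
    have -> : (j == ord0) = false by apply/negbTE; rewrite -val_eqE /= -lt0n (leq_ltn_trans _ lt_ij).
    by [].
  by rewrite big1 // => i _; rewrite !mxE eqxx.
have detB : \det B = 1.
  rewrite -det_tr det_trig; last first.
    apply/is_trig_mxP => i j lt_ij; rewrite !mxE.
    have -> : (j == i) = false by apply/negbTE; rewrite neq_ltn lt_ij orbT.
    have -> : (j == ord0) = false by apply/negbTE; rewrite -val_eqE /= -lt0n (leq_ltn_trans _ lt_ij).
    by rewrite subr0.
  by rewrite big1 // => i _; rewrite !mxE eqxx andbN subr0.
have AM : A *m M = \matrix_(i, j) (if i == ord0 then y - b *+ n.+1 else y *+ (i == j) - b).
  apply/matrixP => i j; rewrite !mxE.
  case: eqP => [-> | /eqP ni0].
    under eq_bigr => k _ do rewrite !mxE orbT mul1r.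
    rewrite sumrB sumr_const card_ord; congr (_ - _).
    rewrite (bigD1 j) //= eqxx big1 ?addr0 // => k /negbTE -> //.
  under eq_bigr => k _ do rewrite !mxE (negbTE ni0) orbF.
  by rewrite sum_deltal.
have T : A *m M *m B = \matrix_(i, j) (if i == ord0 then (if j == ord0 then y - b *+ n.+1 else 0)
                        else (if j == ord0 then - b else y *+ (i == j))).
  apply/matrixP => i j; rewrite AM !mxE.
  under eq_bigr => k _ do rewrite !mxE mulrBr.
  rewrite sumrB sum_delta.
  rewrite (bigD1 ord0) //= big1 ?addr0; last first.
    by move=> k /negbTE ->; rewrite mulr0.
  rewrite /=.
  have [_ | ni0] := eqVneq i ord0.
    by have [_ | nj0] := eqVneq j ord0; rewrite ?eqxx ?nj0 /= ?mulr0 ?subr0 ?mulr1 ?subrr.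
  have [Hj | nj0] := eqVneq j ord0; rewrite /= ?mulr0n ?sub0r.
    subst j. by rewrite (negbTE ni0) mulr0 subr0 mulr0n sub0r.
  by rewrite mulr1 opprK subrK.
have <- : \det (A *m M *m B) = \det M by rewrite !det_mulmx detA detB mul1r mulr1.
rewrite T.
rewrite det_trig; last first.
  apply/is_trig_mxP => i j lt_ij; rewrite !mxE.
  have -> : (j == ord0) = false by apply/negbTE; rewrite -val_eqE /= -lt0n (leq_ltn_trans _ lt_ij).
  have -> : (i == j) = false by apply/negbTE; rewrite neq_ltn lt_ij.
  by case: ifP.
rewrite big_ord_recl !mxE eqxx mulrC; congr (_ * _).
rewrite -[in RHS](card_ord n) -prodr_const; apply: eq_bigr => i _.
by rewrite !mxE /= eqxx.
Qed.
Lemma setDUK' (T : finType) (S h : {set T}) : S \subset h -> (h :\: S) :|: S = h.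
Proof.
move=> /subsetP sh; apply/setP => x; rewrite !inE.
by case xS: (x \in S); rewrite ?orbT ?orbF ?andbT //= sh.
Qed.

Arguments setDUK' {T S h}.

Lemma card_ksup (T : finType) (S : {set T}) k : (#|S| <= k)%N ->
  #|[set h : {set T} | (#|h| == k) && (S \subset h)]| = 'C(#|T| - #|S|, k - #|S|).
Proof.
move=> Sk.
rewrite -(cardsC S) addKn -cards_draws.
have inj : {in [set h : {set T} | (#|h| == k) && (S \subset h)] &, injective (fun h => h :\: S)}.
  move=> h1 h2; rewrite !inE => /andP[_ s1] /andP[_ s2] /= e.
  by rewrite -(setDUK' s1) -(setDUK' s2) e.
rewrite -(card_in_imset inj); apply: eq_card => g; apply/imsetP/idP.
  move=> [h]; rewrite inE => /andP[/eqP hk sh] ->.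
  rewrite inE subsetDr /= cardsD (setIidPr sh) hk.
  by [].
rewrite inE => /andP[gS /eqP gk].
have dis : g :&: S = set0 by apply: disjoint_setI0; rewrite disjoints_subset.
exists (g :|: S).
  rewrite inE cardsU dis cards0 subn0 gk subnK // eqxx /=.
  exact: subsetUr.
rewrite setDUl setDv setU0; apply/esym/setDidPl.
by rewrite -setI_eq0 dis.
Qed.

Theorem mainTheorem8 (R : numFieldType) (N c : nat) :
  (2 <= c)%N -> (c <= N)%N ->
  char_poly (hlaplacian R (complete_hypergraph N c)) =
    ('X - ((N - c)%:R / (N - 1)%:R)%:P) ^+ (N - 1) * ('X - (c%:R)%:P).
Proof.
case: N => [|n]; first by case: c => [|[|m]].
case: c => [|[|m]] // _ cN.
have mn : (m < n)%N by [].
rewrite subn1 /=.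
set H := complete_hypergraph n.+1 m.+2.
have degE : forall i, hdeg H i = 'C(n, m.+1).
  move=> i; have := @card_ksup _ [set i] m.+2.
  rewrite cards1 card_ord subn1 /= subSS subn0 => <- //.
  by apply: eq_card => h; rewrite !inE sub1set.
have pairE : forall i j, i != j ->
    #|[set h in H | (i \in h) && (j \in h)]| = 'C(n.-1, m).
  move=> i j ij; have := @card_ksup _ [set i; j] m.+2.
  rewrite cards2 ij card_ord /= !subSS subn0 subn1 => <- //.
  by apply: eq_card => h; rewrite !inE subUset !sub1set.
have nz : (n%:R : R) != 0 by rewrite pnatr_eq0 -lt0n (leq_ltn_trans _ mn).
have dnz : ('C(n, m.+1)%:R : R) != 0 by rewrite pnatr_eq0 -lt0n bin_gt0.
set q : R := m.+1%:R / n%:R.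
have key : ('C(n, m.+1)%:R)^-1 * ('C(n.-1, m)%:R) = q.
  have k : (n%:R * 'C(n.-1, m)%:R = m.+1%:R * 'C(n, m.+1)%:R :> R).
    by rewrite -!natrM mul_bin_diag.
  rewrite /q -[X in _ * X = _](mulKf nz) k. field. by rewrite nz dnz.
have LE : hlaplacian R H = \matrix_(i, j) (if i == j then 1 else q).
  apply/matrixP => i j; rewrite !mxE (bigD1 i) //= big1 ?addr0; last first.
    by move=> k nk; rewrite !mxE eq_sym (negbTE nk) mul0r.
  rewrite !mxE eqxx degE.
  have [_ | nij] := eqVneq i j; first by rewrite mulr0 subr0.
  by rewrite pairE // mulr0n mulrN opprK add0r key.
rewrite /char_poly /char_poly_mx LE.
have -> : 'X%:M - map_mx polyC (\matrix_(i, j) (if i == j then 1 else q) : 'M[R]_n.+1)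
    = \matrix_(i, j) (('X - (1 - q)%:P) *+ (i == j) - q%:P).
  apply/matrixP => i j; rewrite !mxE.
  have [_ | nij] := eqVneq i j; last by rewrite !mulr0n !sub0r.
  by rewrite !mulr1n polyCB polyC1; ring.
rewrite det_aIbJ.
have e1 : 1 - q = (n.+1 - m.+2)%:R / n%:R.
  rewrite /q natrB //; field; exact nz.
have e2 : (1 - q) + q *+ n.+1 = m.+2%:R.
  rewrite /q -mulr_natr; field; exact nz.
rewrite e1 -e2 polyCD polyCMn opprD addrA -e1.
by [].
Qed.
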